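(* Let $g\in\mathcal G^{\mathrm{dyad}}$. (1) For $d\ge\deg(g)$ and a permutation $\pi$ of $\{1,\dots,2^d\}$ with $g=g_\pi$, the map $T_g:\mathcal H^{X,d}\to\mathcal H^{X,d}$, $T_gf(X_{I^d_1},\dots,X_{I^d_{2^d}}):=f(X_{I^d_{\pi(1)}},\dots,X_{I^d_{\pi(2^d)}})$, is well defined: if $f_1(X_{I^d_1},\dots,X_{I^d_{2^d}})=f_2(X_{I^d_1},\dots,X_{I^d_{2^d}})$ a.s., then $f_1(X_{I^d_{\pi(1)}},\dots)=f_2(X_{I^d_{\pi(1)}},\dots)$ a.s. (2) For $e\ge d\ge\deg(g)$ and $g=g_{\pi_e}=g_{\pi_d}$ with $\pi_e,\pi_d$ permutations of $\{1,\dots,2^e\}$, $\{1,\dots,2^d\}$ respectively, the restriction of $T_{g_{\pi_e}}$ (defined on $\mathcal H^{X,e}$) to $\mathcal H^{X,d}$ equals $T_{g_{\pi_d}}$. (3) For $F\in\mathcal H^{X,d}$ with $d\ge\deg(g)$, $F$ and $T_gF$ have the same distribution; in particular $T_g$ is a linear isometry with respect to the $L_2(\mathcal F^X)$-norm.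
   Context: $X=(X_t)_{t\in[0,1]}$ is a Lévy process with càdlàg paths and $X_0\equiv0$ on a complete probability space; $\mathcal F^X$ is $\sigma(X_t:t\in[0,1])$ augmented by null sets; $X_{(a,b]}:=X_b-X_a$. Dyadic intervals $I^d_k=((k-1)2^{-d},k2^{-d}]$. $\mathcal H^{X,d}=\{f(X_{I^d_1},\dots,X_{I^d_{2^d}}):f\text{ bounded continuous on }\mathbb R^{2^d}\}\subseteq L_2(\mathcal F^X)$ (as a.s.-equivalence classes). For a permutation $\pi$ of $\{1,\dots,2^d\}$, $g_\pi:(0,1]\to(0,1]$ is $g_\pi(t)=\pi(k)2^{-d}-(k2^{-d}-t)$ for $t\in I^d_k$; $\mathcal G^{\mathrm{dyad}}$ is the set of all $g_\pi$, $d\ge0$; $\deg(g)$ is the least $d$ such that $g=g_\pi$ for some permutation $\pi$ of $\{1,\dots,2^d\}$. *)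

(* Defs.v *)
From HB Require Import structures.
From mathcomp Require Import all_boot all_order all_algebra all_fingroup.
From mathcomp Require Import all_classical all_reals all_analysis.
Set Implicit Arguments. Unset Strict Implicit. Unset Printing Implicit Defensive.
Import Order.TTheory GRing.Theory Num.Theory.
Import numFieldNormedType.Exports.
Local Open Scope classical_set_scope.
Local Open Scope ring_scope.

Section Defs.
Context {R : realType} {d0 : measure_display} {Omega : measurableType d0}.

Definition dyad_pt (d k : nat) : R := k%:R / (2 ^ d)%:R.

(* (X_{I^d_1},...,X_{I^d_{2^d}}) ; with 0-based index k : 'I_(2^d), the
   k-th coordinate is X_{(k 2^-d, (k+1) 2^-d]} = X_{(k+1)2^-d} - X_{k 2^-d} *)
Definition dyad_incr (X : R -> Omega -> R) (d : nat) (w : Omega)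
  : 'rV[R]_(2 ^ d) :=
  \row_(k < 2 ^ d) (X (dyad_pt d k.+1) w - X (dyad_pt d k) w).

Definition dyad_incr_perm (X : R -> Omega -> R) (d : nat)
  (pi : {perm 'I_(2 ^ d)}) (w : Omega) : 'rV[R]_(2 ^ d) :=
  \row_(k < 2 ^ d) (dyad_incr X d w) 0 (pi k).

(* g_pi : (0,1] -> (0,1]; for t in I^d_k (0-based: (k 2^-d,(k+1) 2^-d]),
   g_pi(t) = (pi(k)+1) 2^-d - ((k+1) 2^-d - t).  (Value 0 outside (0,1].) *)
Definition gperm (d : nat) (pi : {perm 'I_(2 ^ d)}) (t : R) : R :=
  \sum_(k < 2 ^ d)
    (if (dyad_pt d k < t) && (t <= dyad_pt d k.+1)
     then dyad_pt d (pi k).+1 - (dyad_pt d k.+1 - t) else 0).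

Definition bounded_continuous (n : nat) (f : 'rV[R]_n -> R) : Prop :=
  continuous f /\ exists M : R, forall x, `|f x| <= M.

Definition levy_process (P : probability Omega R) (X : R -> Omega -> R) : Prop :=
  [/\ (forall t, measurable_fun setT (X t)),
      (forall w, X 0 w = 0),
      (forall w, (forall t, 0 <= t < 1 -> X ^~ w @ at_right t --> X t w) /\
                 (forall t, 0 < t <= 1 -> cvg (X ^~ w @ at_left t))),
      (forall (n : nat) (ts : nat -> R) (B : nat -> set R),
          0 <= ts 0%N -> ts n <= 1 ->
          (forall i, (i < n)%N -> ts i <= ts i.+1) ->
          (forall i, measurable (B i)) ->
          (P (\bigcap_(i in `I_n) [set w | (X (ts i.+1) w - X (ts i) w)%R \in B i])
          = \prod_(i < n) P [set w | (X (ts i.+1) w - X (ts i) w)%R \in B i])%E) &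
      (forall s t (B : set R), 0 <= s -> s <= t -> t <= 1 -> measurable B ->
          P [set w | X t w - X s w \in B] = P [set w | X (t - s) w \in B])].

End Defs.

(* Main.v *)
Require Import Defs.
From HB Require Import structures.
From mathcomp Require Import all_boot all_order all_algebra all_fingroup.
From mathcomp Require Import all_classical all_reals all_analysis.
From mathcomp Require Import measurable_realfun.
From mathcomp Require Import zify.
Import Order.TTheory GRing.Theory Num.Theory.
Import numFieldNormedType.Exports.
Local Open Scope classical_set_scope.
Local Open Scope ring_scope.

Section Law.
Context {R : realType} {d0 : measure_display} {Omega : measurableType d0}.
Variable P : probability Omega R.

Definition rect n : set (set 'rV[R]_n) :=
  [set S | exists B : 'I_n -> set R, (forall i, measurable (B i)) /\
     S = [set x : 'rV[R]_n | forall i, B i (x ord0 i)]].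

Lemma rect_setI n : setI_closed (rect n).
Proof.
move=> _ _ [B [mB ->]] [C [mC ->]]; exists (fun i => B i `&` C i); split.
  by move=> i; apply: measurableI.
by apply/seteqP; split => x /=; [move=> [h1 h2] i; split|move=> h; split => i; case: (h i)].
Qed.

Lemma rect_pre_meas n (Y : Omega -> 'rV[R]_n) :
  (forall i, measurable_fun setT (fun w => Y w ord0 i)) ->
  forall S, rect n S -> measurable (Y @^-1` S).
Proof.
move=> mY _ [B [mB ->]].
have -> : Y @^-1` [set x | forall i, B i (x ord0 i)] =
   \bigcap_(i in [set: 'I_n]) ((fun w => Y w ord0 i) @^-1` B i).
  by apply/seteqP; split => w /= h i; [move=> _; exact: h|exact: h].
apply: fin_bigcap_measurable; first exact: finite_finset.
by move=> i _; rewrite -[X in measurable X]setTI; apply: mY.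
Qed.

Lemma law_ext n (Y Y' : Omega -> 'rV[R]_n) :
  (forall i, measurable_fun setT (fun w => Y w ord0 i)) ->
  (forall i, measurable_fun setT (fun w => Y' w ord0 i)) ->
  (forall S, rect n S -> P (Y @^-1` S) = P (Y' @^-1` S)) ->
  forall S, <<s rect n >> S ->
    [/\ measurable (Y @^-1` S), measurable (Y' @^-1` S) &
        P (Y @^-1` S) = P (Y' @^-1` S)].
Proof.
move=> mY mY' hR.
pose D := [set S : set 'rV[R]_n | [/\ measurable (Y @^-1` S), measurable (Y' @^-1` S) &
        P (Y @^-1` S) = P (Y' @^-1` S)]].
suff : <<s rect n >> `<=` D by [].
rewrite -setI_closed_g_dynkin_g_sigma_algebra; last exact: rect_setI.
apply: smallest_sub.
  split.
  - by rewrite /D /= !preimage_setT; split.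
  - Timeout 10 move=> S.
    Timeout 10 move=> [m1 m2 e].
    Timeout 10 rewrite /D.
    Timeout 10 rewrite /mkset.
    Timeout 10 rewrite -(preimage_setC Y) -(preimage_setC Y').
    split.
    + exact: measurableC.
    + exact: measurableC.
    + Timeout 10 rewrite (probability_setC P m1). Timeout 10 rewrite (probability_setC P m2). by rewrite e.
  - move=> F tF hF; rewrite /D /mkset.
    Timeout 10 rewrite !preimage_bigcup.
    have t1 : forall (Z : Omega -> 'rV[R]_n), trivIset setT (fun k => Z @^-1` F k).
      move=> Z; apply/trivIsetP => i j _ _ ij; rewrite -preimage_setI.
      by move/trivIsetP : tF => /(_ _ _ I I ij) ->; rewrite preimage_set0.
    split.
    + by apply: bigcup_measurable => k _; case: (hF k).
    + by apply: bigcup_measurable => k _; case: (hF k).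
    + Timeout 10 rewrite (measure_bigcup P) //; last by move=> k _; case: (hF k).
      Timeout 10 rewrite (measure_bigcup P) //; last by move=> k _; case: (hF k).
      by apply: eq_eseriesr => k _; case: (hF k).
move=> S RS; split; [exact: rect_pre_meas|exact: rect_pre_meas|exact: hR].
Qed.

Lemma open_rect n (U : set 'rV[R]_n) : open U -> <<s rect n >> U.
Proof.
move=> oU.
pose box (q : {ffun 'I_n -> rat * rat}) := [set x : 'rV[R]_n |
   forall i, `](ratr (q i).1 : R), (ratr (q i).2)[%classic (x ord0 i)].
have rbox q : rect n (box q).
  exists (fun i => `](ratr (q i).1 : R), (ratr (q i).2)[%classic); split => //.
pose F (k : nat) : set 'rV[R]_n := match @unpickle {ffun 'I_n -> rat * rat} k with
  | Some q => if pselect (box q `<=` U) is left _ then box q else set0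
  | None => set0 end.
have [h0 _ hU] := @smallest_sigma_algebra _ [set: 'rV[R]_n] (rect n).
have -> : U = \bigcup_k F k.
  apply/seteqP; split; last first.
    move=> x [k _]; rewrite /F; case: unpickle => [q|] //.
    by case: pselect => // sU /sU.
  move=> x Ux.
  have : nbhs x U by rewrite openE in oU; exact: oU.
  move=> /nbhs_ballP [e e0 sU].
  have hq : forall i : 'I_n, exists ab : rat * rat,
     (x ord0 i - e < ratr ab.1 < x ord0 i) /\ (x ord0 i < ratr ab.2 < x ord0 i + e).
    move=> i.
    have [a] : exists q : rat, (ratr q : R) \in `]x ord0 i - e, x ord0 i[.
      by apply: rat_in_itvoo; rewrite ltrBlDr ltrDl.
    have [b] : exists q : rat, (ratr q : R) \in `]x ord0 i, x ord0 i + e[.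
      by apply: rat_in_itvoo; rewrite ltrDl.
    by rewrite !in_itv /= => hb ha; exists (a, b).
  have [qf hqf] := choice hq.
  pose q := [ffun i => qf i].
  have bq : box q `<=` U.
    move=> y yb; apply: sU; split => // i j.
    rewrite (ord1 i); have := yb j; rewrite /= ffunE in_itv /= => /andP[h1 h2].
    have [/andP[h3 h4] /andP[h5 h6]] := hqf j.
    rewrite /ball /= ltr_distlC; apply/andP; split.
    - by rewrite (lt_trans h3) //.
    - by rewrite (lt_trans h2) //.
  exists (pickle q) => //; rewrite /F pickleK.
  case: pselect => // _ i; rewrite ffunE /= in_itv /=.
  by have [/andP[_ ->] /andP[-> _]] := hqf i.
apply: hU => k; rewrite /F; case: unpickle => [q|] //.
by case: pselect => // _; apply: sub_sigma_algebra.
Qed.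

Lemma cont_rect n (f : 'rV[R]_n -> R) (B : set R) : continuous f -> measurable B ->
  <<s rect n >> (f @^-1` B).
Proof.
move=> cf mB.
pose E := [set B : set R | <<s rect n >> (f @^-1` B)].
have [h0 hC hU] := @smallest_sigma_algebra _ [set: 'rV[R]_n] (rect n).
suff : <<s @RGenInftyO.G R >> `<=` E.
  apply. change ((@RGenInftyO.G R).-sigma.-measurable B).
  by rewrite -RGenInftyO.measurableE.
apply: smallest_sub.
  split.
  - by rewrite /E /= preimage_set0.
  - move=> A EA; rewrite /E /=.
    exact: hC.
  - by move=> F hF; rewrite /E /= preimage_bigcup; exact: hU.
move=> _ [x ->]; rewrite /E /=; apply: open_rect.
apply: open_comp; first by move=> y _; exact: cf.
exact: interval_open.
Qed.

Lemma ae_transfer n (Y Y' : Omega -> 'rV[R]_n) :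
  (forall i, measurable_fun setT (fun w => Y w ord0 i)) ->
  (forall i, measurable_fun setT (fun w => Y' w ord0 i)) ->
  (forall S, rect n S -> P (Y @^-1` S) = P (Y' @^-1` S)) ->
  forall g1 g2 : 'rV[R]_n -> R, continuous g1 -> continuous g2 ->
  {ae P, forall w, g1 (Y w) = g2 (Y w)} ->
  {ae P, forall w, g1 (Y' w) = g2 (Y' w)}.
Proof.
move=> mY mY' hR g1 g2 c1 c2 [N [mN PN sN]].
pose S := (fun x => g1 x - g2 x) @^-1` [set z : R | z != 0].
have oS : open S.
  apply: open_comp; last exact: open_neq.
  by move=> x _; exact: (continuousB (c1 x) (c2 x)).
have [m1 m2 e] := law_ext _ _ _ mY mY' hR _ (open_rect _ _ oS).
exists (Y' @^-1` S); split => //.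
- rewrite -e; apply/eqP; rewrite -measure_le0 -PN; apply: le_measure; rewrite ?inE //.
  move=> w /= hw; apply: sN => /= h; move: hw; rewrite /S /= h subrr eqxx.
  done.
- move=> w /= hw; rewrite /S /= subr_eq0; apply/eqP => h; apply: hw.
  by rewrite h.
Qed.

Lemma law_transfer n (Y Y' : Omega -> 'rV[R]_n) :
  (forall i, measurable_fun setT (fun w => Y w ord0 i)) ->
  (forall i, measurable_fun setT (fun w => Y' w ord0 i)) ->
  (forall S, rect n S -> P (Y @^-1` S) = P (Y' @^-1` S)) ->
  forall f : 'rV[R]_n -> R, continuous f ->
      ((forall B : set R, measurable B ->
         P ((fun w => f (Y w)) @^-1` B)
         = P ((fun w => f (Y' w)) @^-1` B)) /\
      (\int[P]_w ((f (Y w)) ^+ 2)%:E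
       = \int[P]_w ((f (Y' w)) ^+ 2)%:E)%E).
Proof.
move=> mY mY' hR f cf.
have hB : forall B : set R, measurable B ->
   [/\ measurable (Y @^-1` (f @^-1` B)), measurable (Y' @^-1` (f @^-1` B)) &
        P (Y @^-1` (f @^-1` B)) = P (Y' @^-1` (f @^-1` B))].
  by move=> B mB; apply: law_ext => //; exact: cont_rect.
have mZ : measurable_fun setT (fun w => f (Y w)).
  by move=> _ B mB; rewrite setTI; case: (hB B mB).
have mZ' : measurable_fun setT (fun w => f (Y' w)).
  by move=> _ B mB; rewrite setTI; case: (hB B mB).
have e1 : forall B : set R, measurable B ->
         P ((fun w => f (Y w)) @^-1` B) = P ((fun w => f (Y' w)) @^-1` B).
  by move=> B mB; case: (hB B mB).
split => //.
pose Z : {mfun Omega >-> R} := HB.pack (fun w => f (Y w)) (isMeasurableFun.Build _ _ _ _ _ mZ).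
pose Z' : {mfun Omega >-> R} := HB.pack (fun w => f (Y' w)) (isMeasurableFun.Build _ _ _ _ _ mZ').
have msq : measurable_fun [set: R] (fun y : R => ((y ^+ 2)%:E : \bar R)).
  by apply/measurable_EFinP; exact: exprn_measurable.
have sq0 : forall y : R, (0 <= ((y ^+ 2)%:E : \bar R))%E.
  by move=> y; rewrite lee_fin sqr_ge0.
transitivity (\int[P]_x ((fun y : R => ((y ^+ 2)%:E : \bar R)) \o (Z : Omega -> R)) x)%E.
  by [].
rewrite -(@ge0_integral_distribution _ _ _ _ _ P Z) //.
transitivity (\int[P]_x ((fun y : R => ((y ^+ 2)%:E : \bar R)) \o (Z' : Omega -> R)) x)%E;
  last by [].
rewrite -(@ge0_integral_distribution _ _ _ _ _ P Z') //.
apply: eq_measure_integral => A mA _.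
exact: e1.
Qed.
End Law.

Section Levy.
Context {R : realType} {d0 : measure_display} {Omega : measurableType d0}.
Variable P : probability Omega R.

Variable X : R -> Omega -> R.
Hypothesis HX : levy_process P X.

Lemma dyad_pt_ge0 d k : 0 <= dyad_pt d k :> R.
Proof. by rewrite /dyad_pt divr_ge0. Qed.

Lemma dyad_pt_le d i j : (i <= j)%N -> dyad_pt d i <= dyad_pt d j :> R.
Proof. by move=> ij; rewrite /dyad_pt ler_pM2r ?ler_nat // invr_gt0 ltr0n expn_gt0. Qed.

Lemma dyad_pt_full d : dyad_pt d (2 ^ d) = 1 :> R.
Proof. by rewrite /dyad_pt divff // pnatr_eq0 -lt0n expn_gt0. Qed.

Lemma dyad_pt_diff d k : dyad_pt d k.+1 - dyad_pt d k = dyad_pt d 1 :> R.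
Proof. by rewrite /dyad_pt -mulrBl -addn1 natrD addrAC subrr add0r. Qed.

Lemma incr_meas d i : measurable_fun setT (fun w => dyad_incr X d w ord0 i).
Proof.
case: HX => mX _ _ _ _.
rewrite /dyad_incr; under eq_fun do rewrite mxE.
exact: measurable_funB.
Qed.

Lemma incr_perm_meas d (pi : {perm 'I_(2 ^ d)}) i :
  measurable_fun setT (fun w => dyad_incr_perm X pi w ord0 i).
Proof.
rewrite /dyad_incr_perm; under eq_fun do rewrite mxE.
exact: incr_meas.
Qed.

Definition mu1 d (A : set R) := P [set w | X (dyad_pt d 1) w \in A].

Lemma incr_rect d (B : 'I_(2 ^ d) -> set R) : (forall i, measurable (B i)) ->
  P (dyad_incr X d @^-1` [set x | forall i, B i (x ord0 i)]) =
  (\prod_(i < 2 ^ d) mu1 d (B i))%E.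
Proof.
move=> mB; case: HX => _ _ _ hind hstat.
pose Bn (i : nat) : set R := if @insub _ (fun k => (k < 2 ^ d)%N) 'I_(2 ^ d) i is Some j then B j else setT.
have BnE (j : 'I_(2 ^ d)) : Bn j = B j by rewrite /Bn valK.
have h1 : dyad_pt d (2 ^ d) <= 1 :> R by rewrite dyad_pt_full.
have := hind (2 ^ d)%N (dyad_pt d) Bn (dyad_pt_ge0 _ _) h1
   (fun i _ => dyad_pt_le d _ _ (leqnSn i)).
have mBn : forall i, measurable (Bn i).
  by move=> i; rewrite /Bn; case: insub => //.
move=> /(_ mBn) e.
transitivity (P (\bigcap_(i in `I_(2 ^ d)) [set w | (X (dyad_pt d i.+1) w - X (dyad_pt d i) w) \in Bn i])).
  congr (P _); apply/seteqP; split => w /=.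
  - move=> h i /= ilt; have := h (Ordinal ilt); rewrite mxE /= -BnE /=.
    by move=> hb; apply/mem_set.
  - move=> h j; rewrite mxE -BnE; have := h j (ltn_ord j).
    by move/set_mem.
rewrite e; apply: eq_bigr => i _; rewrite BnE /mu1 -(dyad_pt_diff d i).
apply: hstat.
- exact: dyad_pt_ge0.
- exact: dyad_pt_le.
- by rewrite -(dyad_pt_full d); apply: dyad_pt_le; exact: ltn_ord.
- exact: mB.
Qed.


Lemma perm_rect d (pi : {perm 'I_(2 ^ d)}) (S : set 'rV[R]_(2 ^ d)) :
  rect _ S ->
  P (dyad_incr X d @^-1` S) = P (dyad_incr_perm X pi @^-1` S).
Proof.
move=> [B [mB ->]].
have -> : dyad_incr_perm X pi @^-1` [set x | forall i, B i (x ord0 i)] =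
    dyad_incr X d @^-1` [set x | forall j, B (pi^-1 j)%g (x ord0 j)].
  apply/seteqP; split => w /= h j.
  - by have := h ((pi^-1) j)%g; rewrite mxE permKV.
  - by rewrite mxE; have := h (pi j); rewrite permK.
rewrite incr_rect //.
transitivity (\prod_(i < 2 ^ d) mu1 d (B (pi^-1 i)%g))%E; last first.
  by apply/esym; apply: (@incr_rect d (fun j => B (pi^-1 j)%g)) => j; exact: mB.
by rewrite (reindex_inj (@perm_inj _ (pi^-1)%g)).
Qed.
End Levy.

Section Block.
Context {R : realType} {d0 : measure_display} {Omega : measurableType d0}.
Variables d e : nat.
Hypothesis de : (d <= e)%N.

Definition bm := (2 ^ (e - d))%N.

Lemma bm_gt0 : (0 < bm)%N. Proof. by rewrite expn_gt0. Qed.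

Lemma bmE : (2 ^ e = 2 ^ d * bm)%N.
Proof. by rewrite /bm -expnD subnKC. Qed.

Lemma pt_scale x : dyad_pt e (x * bm) = dyad_pt d x :> R.
Proof.
rewrite /dyad_pt bmE !natrM invfM mulrACA divff ?mulr1 //.
by rewrite pnatr_eq0 -lt0n bm_gt0.
Qed.

Lemma pt_lt D a b : (dyad_pt D a < dyad_pt D b :> R) = (a < b)%N.
Proof. by rewrite /dyad_pt ltr_pM2r ?ltr_nat // invr_gt0 ltr0n expn_gt0. Qed.

Lemma pt_le D a b : (dyad_pt D a <= dyad_pt D b :> R) = (a <= b)%N.
Proof. by rewrite /dyad_pt ler_pM2r ?ler_nat // invr_gt0 ltr0n expn_gt0. Qed.

Lemma pt_add D a b : dyad_pt D a + dyad_pt D b = dyad_pt D (a + b) :> R.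
Proof. by rewrite /dyad_pt -mulrDl natrD. Qed.

Lemma pt_inj D a b : dyad_pt D a = dyad_pt D b :> R -> a = b.
Proof. by move=> h; apply/eqP; rewrite eqn_leq -!(pt_le D) h lexx. Qed.

Definition blk (y : 'rV[R]_(2 ^ e)) : 'rV[R]_(2 ^ d) :=
  \row_(k < 2 ^ d) \sum_(j < 2 ^ e | (j %/ bm == k)%N) y ord0 j.

Lemma blk_sum (F : nat -> R) (k : nat) : (k < 2 ^ d)%N ->
  \sum_(j < 2 ^ e | (j %/ bm == k)%N) F j = \sum_(k * bm <= j < k * bm + bm) F j.
Proof.
move=> kd.
rewrite big_geq_mkord (big_ord_widen_cond (2 ^ e)); last first.
  by rewrite bmE -mulSnr leq_mul2r kd orbT.
apply: eq_bigl => j /=.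
rewrite eqn_leq -ltnS ltn_divLR ?bm_gt0 // leq_divRL ?bm_gt0 // mulSnr.
by rewrite andbC.
Qed.

Lemma blk_incr (X : R -> Omega -> R) w : dyad_incr X d w = blk (dyad_incr X e w).
Proof.
apply/rowP => k; rewrite !mxE.
under eq_bigr do rewrite mxE.
rewrite (blk_sum (fun j => X (dyad_pt e j.+1) w - X (dyad_pt e j) w)) //.
rewrite telescope_sumr ?leq_addr //.
by rewrite -mulSnr !pt_scale.
Qed.


Lemma blk_cont : continuous blk.
Proof.
move=> x A /= /nbhs_ballP [eps e0 hA].
pose N := (2 ^ e)%N.
pose dl := eps / (N.+1)%:R.
have dl0 : 0 < dl by rewrite divr_gt0.
apply/nbhs_ballP; exists dl => // y [_ hy]; apply: hA; split => // i j.
rewrite (ord1 i) /ball /= !mxE -sumrB.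
apply: (le_lt_trans (ler_norm_sum _ _ _)).
apply: (@le_lt_trans _ _ (\sum_(k < N) dl)).
  rewrite big_mkcond /=; apply: ler_sum => k _; case: ifP => _ //.
  exact: ltW (hy ord0 k).
  exact: ltW.
rewrite big_const_ord iter_addr addr0 /dl -mulrnAr gtr_pMr // -mulr_natr mulrC.
by rewrite ltr_pdivrMr ?ltr0n // mul1r ltr_nat.
Qed.

Lemma gperm_pt D (pi : {perm 'I_(2 ^ D)}) (k : 'I_(2 ^ D)) (t : R) :
  dyad_pt D k < t <= dyad_pt D k.+1 ->
  gperm pi t = dyad_pt D (pi k).+1 - (dyad_pt D k.+1 - t).
Proof.
move=> hk; rewrite /gperm (bigD1 k) //= hk big1 ?addr0 // => k' nk'.
case: ifP => // /andP[h1 h2]; exfalso; move/andP: hk => [h3 h4].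
have : (k' < k.+1)%N by rewrite -(pt_lt D) (lt_le_trans h1 h4).
have : (k < k'.+1)%N by rewrite -(pt_lt D) (lt_le_trans h3 h2).
move: nk'; rewrite -val_eqE /= => /eqP; lia.
Qed.

Lemma key (pid : {perm 'I_(2 ^ d)}) (pie : {perm 'I_(2 ^ e)})
  (hg : forall t : R, 0 < t <= 1 -> gperm pie t = gperm pid t)
  (K : 'I_(2 ^ e)) (hK : (K %/ bm < 2 ^ d)%N) :
  (pie K : nat) = (pid (Ordinal hK) * bm + K %% bm)%N.
Proof.
set k := Ordinal hK.
have ht : 0 < (dyad_pt e K.+1 : R) <= 1.
  apply/andP; split.
    by rewrite (_ : 0 = dyad_pt e 0) ?pt_lt // /dyad_pt mul0r.
  rewrite (_ : 1 = dyad_pt e (2 ^ e)) ?pt_le //.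
  by rewrite /dyad_pt divff // pnatr_eq0 -lt0n expn_gt0.
have := hg _ ht.
rewrite (@gperm_pt e pie K); last by rewrite lexx pt_lt ltnSn.
rewrite subrr subr0.
rewrite (@gperm_pt d pid k); last first.
  rewrite -!pt_scale pt_lt pt_le /= ltnS leq_trunc_div /=.
  exact: ltn_ceil bm_gt0.
rewrite -!pt_scale opprB => h.
have h2 : dyad_pt e (pie K).+1 + dyad_pt e (k.+1 * bm) =
    dyad_pt e ((pid k).+1 * bm) + dyad_pt e K.+1 :> R.
  by rewrite h -addrA subrK.
move: h2; rewrite !pt_add => /pt_inj.
have hK2 := divn_eq K bm.
have hr := ltn_pmod K bm_gt0.
rewrite !mulSn.
move: hK2 hr; rewrite -/k.
set a := (k * bm)%N; set b := (pid k * bm)%N; set r := (K %% bm)%N.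
lia.
Qed.

Lemma blk_incr_perm (X : R -> Omega -> R) (pid : {perm 'I_(2 ^ d)}) (pie : {perm 'I_(2 ^ e)})
  (hg : forall t : R, 0 < t <= 1 -> gperm pie t = gperm pid t) w :
  dyad_incr_perm X pid w = blk (dyad_incr_perm X pie w).
Proof.
apply/rowP => k; rewrite /dyad_incr_perm mxE (blk_incr X w) /blk !mxE.
under [RHS]eq_bigr do rewrite mxE.
rewrite (reindex_inj (@perm_inj _ pie)) /=.
apply: eq_bigl => j.
have hK : (j %/ bm < 2 ^ d)%N by rewrite ltn_divLR ?bm_gt0 // -bmE.
rewrite (key _ _ hg j hK) divnMDl ?bm_gt0 // (divn_small (ltn_pmod j bm_gt0)) addn0.
by rewrite (inj_eq val_inj) (inj_eq (@perm_inj _ pid)) -(inj_eq val_inj).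
Qed.
End Block.

Theorem lemma2p4 (R : realType) (d0 : measure_display)
  (Omega : measurableType d0) (P : probability Omega R)
  (X : R -> Omega -> R) (HX : levy_process P X) :
  (* (1) well-definedness of T_g on H^{X,d} *)
  (forall (d : nat) (pi : {perm 'I_(2 ^ d)}) (f1 f2 : 'rV[R]_(2 ^ d) -> R),
      bounded_continuous f1 -> bounded_continuous f2 ->
      {ae P, forall w, f1 (dyad_incr X d w) = f2 (dyad_incr X d w)} ->
      {ae P, forall w, f1 (dyad_incr_perm X pi w) = f2 (dyad_incr_perm X pi w)})
  /\
  (* (2) consistency: H^{X,d} ⊆ H^{X,e} and T_{g_{pi_e}} restricted to
     H^{X,d} equals T_{g_{pi_d}} *)
  (forall (d e : nat) (pid : {perm 'I_(2 ^ d)}) (pie : {perm 'I_(2 ^ e)}),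
      (d <= e)%N ->
      (forall t : R, 0 < t <= 1 -> gperm pie t = gperm pid t) ->
      forall f : 'rV[R]_(2 ^ d) -> R, bounded_continuous f ->
      (exists h : 'rV[R]_(2 ^ e) -> R, bounded_continuous h /\
         {ae P, forall w, h (dyad_incr X e w) = f (dyad_incr X d w)}) /\
      (forall h : 'rV[R]_(2 ^ e) -> R, bounded_continuous h ->
         {ae P, forall w, h (dyad_incr X e w) = f (dyad_incr X d w)} ->
         {ae P, forall w, h (dyad_incr_perm X pie w) = f (dyad_incr_perm X pid w)}))
  /\
  (* (3) F and T_g F have the same law; in particular equal L_2 norms *)
  (forall (d : nat) (pi : {perm 'I_(2 ^ d)}) (f : 'rV[R]_(2 ^ d) -> R),
      bounded_continuous f ->
      (forall B : set R, measurable B ->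
         P ((fun w => f (dyad_incr X d w)) @^-1` B)
         = P ((fun w => f (dyad_incr_perm X pi w)) @^-1` B)) /\
      (\int[P]_w ((f (dyad_incr X d w)) ^+ 2)%:E
       = \int[P]_w ((f (dyad_incr_perm X pi w)) ^+ 2)%:E)%E).
Proof.
have mI := incr_meas P X HX; have mIP := incr_perm_meas P X HX.
split; [|split].
- move=> d pi f1 f2 [c1 _] [c2 _] hae.
  exact: (ae_transfer P _ _ _ (mI d) (mIP d pi) (perm_rect P X HX d pi) _ _ c1 c2 hae).
- move=> d e pid pie de hg f [cf [M hM]].
  have eYd : dyad_incr X d = fun w => blk d e (dyad_incr X e w).
    by apply: funext => w; exact: blk_incr.
  have eYd' : dyad_incr_perm X pid = fun w => blk d e (dyad_incr_perm X pie w).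
    by apply: funext => w; exact: blk_incr_perm.
  have cA : continuous (fun y => f (blk d e y)).
    by move=> y; apply: continuous_comp; [exact: blk_cont|exact: cf].
  split.
    exists (fun y => f (blk d e y)); split; first by split => //; exists M => x; exact: hM.
    by apply: aeW => w; rewrite eYd.
  move=> h [ch _] hae; rewrite eYd'.
  apply: (ae_transfer P _ _ _ (mI e) (mIP e pie) (perm_rect P X HX e pie) h
     (fun y => f (blk d e y)) ch cA).
  by rewrite eYd in hae.
- move=> d pi f [cf _].
  exact: (law_transfer P _ _ _ (mI d) (mIP d pi) (perm_rect P X HX d pi) f cf).
Qed.
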